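(* Consider the partition posets of $\{1,\dots,n\}$ ordered by refinement (the operadic partition posets of the commutative operad $\operatorname{Com}$), with the labelling which labels the edge between a partition $(A_1,\dots,A_p)$ and the partition obtained by merging two parts $A_i$ and $A_j$ by $\max(\min A_i,\min A_j)$. This labelling is compatible with isomorphisms of subposets.
   Context: $\operatorname{Com}$ is the basic-set operad with a single element $e_n$ in each arity $n\ge1$, with $\gamma(e_p;e_{k_1},\dots,e_{k_p})=e_{k_1+\dots+k_p}$, generated by a binary symmetric operation; its $\operatorname{Com}$-partitions of a set are the usual set partitions and the order is refinement. For a covering $\lambda\prec\omega$ merging $A_i$ and $A_j$, set $D_\lambda^\omega=\{\min A_i,\min A_j\}$ and $\delta_\lambda^\omega$ the element $e_2$ on these two points; for a general $\lambda\le\omega$, $D_\lambda^\omega$ is the set of minima of the parts of $\lambda$ lying in parts of $\omega$ which are not parts of $\lambda$, and $\delta_\lambda^\omega$ the corresponding partition of $D_\lambda^\omega$ induced by $\omega$. Two interval subposets $\Pi_1,\Pi_2$ (of possibly different partition posets) with $E_i=\bigcup_{\lambda\le\omega\in\Pi_i}D_\lambda^\omega$ are isomorphic if there is a poset isomorphism $g:\Pi_1\to\Pi_2$ and an increasing bijection $f:E_1\to E_2$ with $\delta_{g(\lambda)}^{g(\omega)}=f(\delta_\lambda^\omega)$ for every covering $\lambda\prec\omega$. A family of labellings is compatible with isomorphisms of subposets if every such isomorphism induces a map on labels sending increasing chains to increasing chains, non-increasing chains to non-increasing chains, and preserving the lexicographic preorder on chains. *)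

(* Defs.v *)
From mathcomp Require Import all_boot.
Set Implicit Arguments. Unset Strict Implicit. Unset Printing Implicit Defensive.

(* The ground set {1,...,n} is represented by 'I_n, the ordinal i standing
   for the integer i+1.  A set partition (= Com-partition) of {1,...,n} is a
   P : {set {set 'I_n}} with [partition P [set: 'I_n]]. *)
Notation part n := {set {set 'I_n}}.

Definition is_part n (P : part n) : bool := partition P [set: 'I_n].

Definition refines n (lam om : part n) : bool :=
  [forall A in lam, exists B in om, A \subset B].

Definition merges n (lam om : part n) (A B : {set 'I_n}) : Prop :=
  [/\ A \in lam, B \in lam, A != B & om = (lam :\ A :\ B) :|: [set A :|: B]].

Definition covers n (lam om : part n) : Prop :=
  exists A B, merges lam om A B.

Definition is_min n (A : {set 'I_n}) (i : 'I_n) : bool :=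
  (i \in A) && [forall j in A, i <= j].

Definition min1 n (A : {set 'I_n}) : nat := (\big[minn/n]_(i in A) (i : nat)).+1.

Definition Dset n (lam om : part n) : {set 'I_n} :=
  [set i | [exists A in lam, is_min A i &&
             [exists B in om, (A \subset B) && (B \notin lam)]]].

Definition delta n (lam om : part n) : {set {set 'I_n}} :=
  [set B :&: Dset lam om | B in om & B :&: Dset lam om != set0].

Definition in_interval n (a b x : part n) : bool :=
  [&& is_part x, refines a x & refines x b].

Definition is_interval n (a b : part n) : bool :=
  [&& is_part a, is_part b & refines a b].

Definition Eset n (a b : part n) : {set 'I_n} :=
  [set i | [exists lam, exists om,
     [&& in_interval a b lam, in_interval a b om, refines lam om &
         i \in Dset lam om]]].

Definition subposet_iso n1 n2 (a1 b1 : part n1) (a2 b2 : part n2)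
    (g : part n1 -> part n2) (f : 'I_n1 -> 'I_n2) : Prop :=
  [/\
      (forall x, in_interval a1 b1 x -> in_interval a2 b2 (g x)),
      (forall x y, in_interval a1 b1 x -> in_interval a1 b1 y -> g x = g y -> x = y),
      (forall y, in_interval a2 b2 y -> exists2 x, in_interval a1 b1 x & g x = y) &
      (forall x y, in_interval a1 b1 x -> in_interval a1 b1 y ->
          refines x y = refines (g x) (g y))] /\
  (
      [/\ (forall i, i \in Eset a1 b1 -> f i \in Eset a2 b2),
          (forall i j, i \in Eset a1 b1 -> j \in Eset a1 b1 ->
             (i < j)%N -> (f i < f j)%N) &
          (forall j, j \in Eset a2 b2 -> exists2 i, i \in Eset a1 b1 & f i = j)] /\
      (forall lam om, in_interval a1 b1 lam -> in_interval a1 b1 om ->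
          covers lam om ->
          delta (g lam) (g om) = [set f @: (X : {set 'I_n1}) | X in delta lam om])).

Definition labelling := forall n, part n -> part n -> nat.

Fixpoint cover_path n (x : part n) (s : seq (part n)) : Prop :=
  if s is y :: s' then covers x y /\ cover_path y s' else True.

Definition max_chain n (a b : part n) (s : seq (part n)) : Prop :=
  cover_path a s /\ last a s = b.

Definition chain_labels (lab : labelling) n (a : part n) (s : seq (part n)) : seq nat :=
  pairmap (@lab n) a s.

Definition increasing (s : seq nat) : bool := sorted ltn s.

Fixpoint lex_le (s t : seq nat) : bool :=
  match s, t with
  | [::], _ => true
  | _ :: _, [::] => false
  | x :: s', y :: t' => (x < y)%N || ((x == y) && lex_le s' t')
  end.

Definition compatible_with_isos (lab : labelling) : Prop :=
  forall n1 n2 (a1 b1 : part n1) (a2 b2 : part n2)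
         (g : part n1 -> part n2) (f : 'I_n1 -> 'I_n2),
    is_interval a1 b1 -> is_interval a2 b2 -> subposet_iso a1 b1 a2 b2 g f ->
    exists phi : nat -> nat,
      (forall lam om, in_interval a1 b1 lam -> in_interval a1 b1 om ->
          covers lam om -> lab n2 (g lam) (g om) = phi (lab n1 lam om)) /\
      (forall s, max_chain a1 b1 s ->
          (increasing (chain_labels lab a1 s) ->
             increasing (chain_labels lab (g a1) (map g s))) /\
          (~~ increasing (chain_labels lab a1 s) ->
             ~~ increasing (chain_labels lab (g a1) (map g s)))) /\
      (forall s t, max_chain a1 b1 s -> max_chain a1 b1 t ->
          lex_le (chain_labels lab a1 s) (chain_labels lab a1 t) ->
          lex_le (chain_labels lab (g a1) (map g s))
                 (chain_labels lab (g a1) (map g t))).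

(* For a covering, lam :\: om = {A_i, A_j}, the two
   merged parts.  (Off coverings the value is irrelevant.) *)
Definition com_label : labelling :=
  fun n lam om => \max_(A in lam :\: om) min1 A.

(* Main.v *)
Require Import Defs.
From mathcomp Require Import all_boot.
Set Implicit Arguments. Unset Strict Implicit. Unset Printing Implicit Defensive.

Lemma part_ex n (P : part n) i : is_part P -> exists2 A, A \in P & i \in A.
Proof.
case/and3P => /eqP cP _ _.
have : i \in cover P by rewrite cP inE.
by case/bigcupP => A HA Hi; exists A.
Qed.

Lemma part_uniq n (P : part n) A B i :
  is_part P -> A \in P -> B \in P -> i \in A -> i \in B -> A = B.
Proof.
case/and3P => _ tP _ HA HB iA iB.
by rewrite -(def_pblock tP HA iA) (def_pblock tP HB iB).
Qed.

Lemma part_ne n (P : part n) A : is_part P -> A \in P -> exists i, i \in A.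
Proof.
case/and3P => _ _ P0 HA; apply/set0Pn; apply: contraNneq P0 => <-; done.
Qed.

Lemma part_intro n (P : part n) :
  (forall i, exists2 A, A \in P & i \in A) ->
  (forall A B i, A \in P -> B \in P -> i \in A -> i \in B -> A = B) ->
  (forall A, A \in P -> exists i, i \in A) -> is_part P.
Proof.
move=> Hex Hun Hne; apply/and3P; split.
- apply/eqP/setP => i; rewrite inE; apply/bigcupP.
  by case: (Hex i) => A HA Hi; exists A.
- apply/trivIsetP => A B HA HB nAB; rewrite -setI_eq0; apply/eqP/setP => i.
  rewrite !inE; apply/negP => /andP[iA iB]; move/eqP: nAB; apply.
  exact: (Hun A B i).
- apply/negP => H0; case: (Hne _ H0) => i; by rewrite inE.
Qed.

Lemma ref_get n (x y : part n) A : refines x y -> A \in x -> exists2 C, C \in y & A \subset C.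
Proof. by move/forall_inP => H /H /exists_inP[C HC HAC]; exists C. Qed.

Lemma ref_intro n (x y : part n) :
  (forall A, A \in x -> exists2 C, C \in y & A \subset C) -> refines x y.
Proof. by move=> H; apply/forall_inP => A /H [C HC HAC]; apply/exists_inP; exists C. Qed.

Lemma ref_refl n (x : part n) : refines x x.
Proof. by apply: ref_intro => A HA; exists A. Qed.

Lemma ref_trans n (x y z : part n) : refines x y -> refines y z -> refines x z.
Proof.
move=> H1 H2; apply: ref_intro => A /(ref_get H1) [B HB sAB].
case: (ref_get H2 HB) => C HC sBC; exists C => //; exact: subset_trans sAB sBC.
Qed.

Lemma ref_blk n (x y : part n) A C i : is_part y -> refines x y ->
  A \in x -> C \in y -> i \in A -> i \in C -> A \subset C.
Proof.
move=> py r HA HC iA iC; case: (ref_get r HA) => D HD sAD.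
by rewrite (part_uniq py HC HD iC (subsetP sAD _ iA)).
Qed.

Definition blk_of n (x : part n) (C : {set 'I_n}) : {set 'I_n} :=
  if [pick c in C] is Some c then pblock x c else set0.

Lemma blk_ofP n (x : part n) (C : {set 'I_n}) : is_part x -> (exists i, i \in C) ->
  exists c, [/\ c \in C, blk_of x C \in x & c \in blk_of x C].
Proof.
move=> px [i iC]; rewrite /blk_of; case: pickP => [c cC|/(_ i)]; last by rewrite iC.
have cc : c \in cover x by case/and3P: px => /eqP -> _ _; rewrite inE.
by exists c; split => //; [apply: pblock_mem | rewrite mem_pblock].
Qed.

Lemma card_ref n (x y : part n) : is_part x -> is_part y -> refines x y ->
  (#|y| <= #|x|) && ((#|y| == #|x|) ==> (x == y)).
Proof.
move=> px py r.
have kP : forall C, C \in y -> exists c, [/\ c \in C, blk_of x C \in x, c \in blk_of x C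
         & blk_of x C \subset C].
  move=> C HC; case: (blk_ofP px (part_ne py HC)) => c [cC Hk ck].
  by exists c; split => //; apply: (ref_blk py r Hk HC ck cC).
have kinj : {in y &, injective (blk_of x)}.
  move=> C C' HC HC' E; case: (kP C HC) => c [cC Hk ck _].
  case: (kP C' HC') => c' [_ _ _ s']. rewrite E in ck.
  exact: (part_uniq py HC HC' cC (subsetP s' _ ck)).
have sub : blk_of x @: y \subset x.
  by apply/subsetP => Z /imsetP[C HC ->]; case: (kP C HC) => c [].
have cy : #|y| = #|blk_of x @: y| by rewrite card_in_imset.
apply/andP; split; first by rewrite cy subset_leq_card.
apply/implyP => /eqP ce.
have ex : blk_of x @: y = x by apply/eqP; rewrite eqEcard sub -cy ce leqnn.
have CK : forall C, C \in y -> blk_of x C = C.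
  move=> C HC; case: (kP C HC) => c [cC Hk ck sk]; apply/eqP; rewrite eqEsubset sk /=.
  apply/subsetP => e eC; case: (part_ex e px) => A' HA' eA'.
  have : A' \in blk_of x @: y by rewrite ex.
  case/imsetP => C'' HC'' EA.
  case: (kP C'' HC'') => c'' [_ _ _ s''].
  have eC'' : e \in C'' by rewrite EA in eA'; exact: subsetP s'' _ eA'.
  have := part_uniq py HC HC'' eC eC''; move=> EC; subst C''.
  by move: eA'; rewrite EA.
apply/eqP; rewrite -ex; apply/setP => Z; apply/imsetP/idP.
  by case=> C HC ->; rewrite CK.
by move=> HZ; exists Z => //; rewrite CK.
Qed.

Lemma ref_antisym n (x y : part n) : is_part x -> is_part y -> refines x y ->
  #|y| = #|x| -> x = y.
Proof.
move=> px py r e; have /andP[_ /implyP H] := card_ref px py r.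
by apply/eqP; apply: H; rewrite e.
Qed.

Lemma ref_card n (x y : part n) : is_part x -> is_part y -> refines x y -> #|y| <= #|x|.
Proof. by move=> px py r; case/andP: (card_ref px py r). Qed.

Lemma exists_merge n (x y : part n) : is_part x -> is_part y -> refines x y -> x != y ->
  exists A B C, [/\ A \in x, B \in x, A != B, C \in y & (A \subset C) && (B \subset C)].
Proof.
move=> px py r nxy.
have hP : forall A, A \in x -> blk_of y A \in y /\ A \subset blk_of y A.
  move=> A HA; case: (blk_ofP py (part_ne px HA)) => c [cA Hk ck].
  by split => //; apply: (ref_blk py r HA Hk cA ck).
case: (boolP [exists A in x, exists B in x, (A != B) && (blk_of y A == blk_of y B)]).
  case/exists_inP => A HA /exists_inP[B HB /andP[nAB /eqP E]].
  exists A, B, (blk_of y A); case: (hP A HA) => h1 h2; case: (hP B HB) => _ h3.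
  by split => //; rewrite h2 E h3.
move=> Hn; exfalso.
have inj : {in x &, injective (blk_of y)}.
  move=> A B HA HB E; apply/eqP/negPn/negP => nAB; move/negP: Hn; apply.
  by apply/exists_inP; exists A => //; apply/exists_inP; exists B => //; rewrite nAB E eqxx.
have sub : blk_of y @: x \subset y.
  by apply/subsetP => Z /imsetP[A HA ->]; case: (hP A HA).
have := subset_leq_card sub; rewrite card_in_imset // => le.
have := ref_antisym px py r; move/(_ (esym _)) => H.
move/eqP: nxy; apply; apply: H; apply/eqP; rewrite eqn_leq le ref_card //.
Qed.

Lemma merge_props n (x y : part n) A B : is_part x -> merges x y A B ->
  [/\ is_part y, refines x y, #|x| = #|y|.+1, A :|: B \notin x &
      forall C, (C \in y) = ((C \in x) && (C != A) && (C != B)) || (C == A :|: B)].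
Proof.
move=> px [HA HB nAB E].
have memy : forall C, (C \in y) = ((C \in x) && (C != A) && (C != B)) || (C == A :|: B).
  by move=> C; rewrite E !inE; case: (C \in x); case: (C == A); case: (C == B); rewrite ?andbF ?orbF.
have disj : forall i, i \in A -> i \in B -> False.
  by move=> i iA iB; move/eqP: nAB; apply; exact: (part_uniq px HA HB iA iB).
have nAB' : A :|: B \notin x.
  apply/negP => H; case: (part_ne px HA) => a aA; case: (part_ne px HB) => b bB.
  have e1 := part_uniq px HA H aA (subsetP (subsetUl A B) _ aA).
  have e2 := part_uniq px HB H bB (subsetP (subsetUr A B) _ bB).
  by move/eqP: nAB; apply; exact: (etrans e1 (esym e2)).
have ABy : A :|: B \in y by rewrite memy eqxx orbT.
have py : is_part y.
  apply: part_intro.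
  - move=> i; case: (part_ex i px) => P HP iP.
    case: (boolP ((P != A) && (P != B))) => [/andP[h1 h2]|].
      by exists P => //; rewrite memy HP h1 h2.
    rewrite negb_and !negbK => /orP[] /eqP EP; exists (A :|: B) => //;
      by rewrite inE -EP iP ?orbT.
  - move=> C D i; rewrite !memy => /orP[/andP[/andP[HC C1 C2]]|/eqP->] /orP[/andP[/andP[HD D1 D2]]|/eqP->] iC iD //.
    + exact: (part_uniq px HC HD iC iD).
    + exfalso; case/setUP: iD => iD.
        by move/eqP: C1; apply; exact: (part_uniq px HC HA iC iD).
      by move/eqP: C2; apply; exact: (part_uniq px HC HB iC iD).
    + exfalso; case/setUP: iC => iC.
        by move/eqP: D1; apply; exact: (part_uniq px HD HA iD iC).
      by move/eqP: D2; apply; exact: (part_uniq px HD HB iD iC).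
  - move=> C; rewrite memy => /orP[/andP[/andP[HC _ _]]|/eqP->]; first exact: (part_ne px HC).
    by case: (part_ne px HA) => a aA; exists a; rewrite inE aA.
have r : refines x y.
  apply: ref_intro => C HC.
  case: (boolP ((C != A) && (C != B))) => [/andP[h1 h2]|].
    by exists C => //; rewrite memy HC h1 h2.
  rewrite negb_and !negbK => /orP[] /eqP ->; exists (A :|: B) => //.
    exact: subsetUl.
  exact: subsetUr.
split => //.
rewrite E setUC cardsU1 (cardsD1 A x) (cardsD1 B (x :\ A)) HA !inE HB.
rewrite eq_sym nAB /= (negbTE nAB') !andbF /=; by rewrite add1n.
Qed.

Lemma min_ex n (A : {set 'I_n}) : (exists i, i \in A) -> exists m, is_min A m.
Proof.
case=> i iA; case: (arg_minnP (fun j : 'I_n => (j : nat)) iA) => m mA H.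
by exists m; apply/andP; split => //; apply/forall_inP => j jA; apply: H.
Qed.

Lemma min_uniq n (A : {set 'I_n}) i j : is_min A i -> is_min A j -> i = j.
Proof.
case/andP => iA /forall_inP Hi /andP[jA /forall_inP Hj].
by apply/val_inj/anti_leq; rewrite Hi // Hj.
Qed.

Lemma min1_is n (A : {set 'I_n}) m : is_min A m -> min1 A = m.+1.
Proof.
case/andP => mA /forall_inP Hm; rewrite /min1; congr _.+1; apply/anti_leq/andP; split.
  rewrite unlock /index_enum; set s := (X in reducebig _ X _).
  have : m \in s by rewrite /s -enumT mem_enum.
  elim: s => //= a s IH; rewrite inE => /orP[/eqP<-|ms].
    by rewrite /= mA geq_minl.
  case: (a \in A) => /=; [exact: leq_trans (geq_minr _ _) (IH ms) | exact: IH].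
apply: (big_ind (fun v => m <= v)) => //; first exact: ltnW (ltn_ord m).
by move=> u v h1 h2; rewrite leq_min h1 h2.
Qed.

Lemma max2 n (a b : 'I_n) : \max_(i in [set a; b]) (i : nat) = maxn a b.
Proof.
case: (eqVneq a b) => [<-|nab].
  by rewrite setUid big_set1 maxnn.
rewrite big_setU1 /=; last by rewrite inE.
by rewrite big_set1.
Qed.

Lemma max2_eq n (a b c d : 'I_n) : [set a; b] = [set c; d] -> maxn a b = maxn c d.
Proof. by move=> E; rewrite -max2 E max2. Qed.

Lemma merge_D n (x y : part n) A B mA mB : is_part x -> merges x y A B ->
  is_min A mA -> is_min B mB ->
  [/\ Dset x y = [set mA; mB], delta x y = [set [set mA; mB]]
    & com_label x y = (maxn mA mB).+1].
Proof.
move=> px M hA hB; have [HA HB nAB _] := M.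
have [py r cxy nABx memy] := merge_props px M.
have ABy : A :|: B \in y by rewrite memy eqxx orbT.
have blkAB : forall A', A' \in x -> A' \subset A :|: B -> A' = A \/ A' = B.
  move=> A' HA' s; case: (part_ne px HA') => e eA'.
  case/setUP: (subsetP s _ eA') => e1; [left|right]; exact: part_uniq px HA' _ eA' e1.
have DE : Dset x y = [set mA; mB].
  apply/setP => i; rewrite /Dset !inE; apply/idP/idP.
    case/exists_inP => A' HA' /andP[mi /exists_inP[B' HB' /andP[s nB']]].
    have EB' : B' = A :|: B.
      move: HB'; rewrite memy => /orP[/andP[/andP[h _] _]|/eqP //]; by rewrite h in nB'.
    rewrite EB' in s; case: (blkAB A' HA' s) => EA'; subst A'.
      by rewrite (min_uniq mi hA) eqxx.
    by rewrite (min_uniq mi hB) eqxx orbT.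
  case/orP => /eqP ->; [apply/exists_inP; exists A => //| apply/exists_inP; exists B => //];
    rewrite ?hA ?hB /=; apply/exists_inP; exists (A :|: B) => //;
    by rewrite nABx ?subsetUl ?subsetUr.
have DAB : [set mA; mB] \subset A :|: B.
  apply/subsetP => i; rewrite !inE => /orP[] /eqP ->.
    by case/andP: hA => ->.
  by case/andP: hB => ->; rewrite orbT.
split => //.
  rewrite /delta DE; apply/setP => Z; rewrite inE; apply/imsetP/eqP.
    case=> C; rewrite inE => /andP[HC ne] ->; move: HC; rewrite memy => /orP[/andP[/andP[HC C1 C2]]|/eqP ->].
      exfalso; case/set0Pn: ne => e; rewrite !inE => /andP[eC /orP[] /eqP Ee].
        by move/eqP: C1; apply; case/andP: hA => mAA _; apply: part_uniq px HC HA eC _; rewrite Ee.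
      by move/eqP: C2; apply; case/andP: hB => mBB _; apply: part_uniq px HC HB eC _; rewrite Ee.
    by apply/setIidPr.
  move=> ->; exists (A :|: B); last by apply/esym/setIidPr.
  rewrite inE ABy /=; apply/set0Pn; exists mA; rewrite !inE eqxx /=.
  by case/andP: hA => ->.
have XE : x :\: y = [set A; B].
  apply/setP => C; rewrite !inE memy.
  case: (eqVneq C A) => [->|CA] /=; first by rewrite HA andbT; apply/negP => /eqP h; rewrite -h HA in nABx.
  case: (eqVneq C B) => [->|CB] /=; first by rewrite HB andbT; apply/negP => /eqP h; rewrite -h HB in nABx.
  by case: (C \in x); case: (C == A :|: B).
rewrite /com_label XE big_setU1 /=; last by rewrite inE.
by rewrite big_set1 (min1_is hA) (min1_is hB) maxnSS.
Qed.

Lemma covers_props n (x y : part n) : is_part x -> covers x y ->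
  [/\ is_part y, refines x y & #|x| = #|y|.+1].
Proof. by move=> px [A [B M]]; case: (merge_props px M). Qed.

Lemma covers_g n1 n2 (a1 b1 : part n1) (a2 b2 : part n2) (g : part n1 -> part n2) :
  (forall x, in_interval a1 b1 x -> in_interval a2 b2 (g x)) ->
  (forall x y, in_interval a1 b1 x -> in_interval a1 b1 y -> g x = g y -> x = y) ->
  (forall y, in_interval a2 b2 y -> exists2 x, in_interval a1 b1 x & g x = y) ->
  (forall x y, in_interval a1 b1 x -> in_interval a1 b1 y ->
          refines x y = refines (g x) (g y)) ->
  forall lam om, in_interval a1 b1 lam -> in_interval a1 b1 om ->
  covers lam om -> covers (g lam) (g om).
Proof.
move=> gI ginj gsurj gref lam om Il Io cv.
have /and3P[pl _ _] := Il; have /and3P[po _ _] := Io.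
have [_ rlo clo] := covers_props pl cv.
have Igl := gI _ Il; have Igo := gI _ Io.
have /and3P[py1 ra1 rb1] := Igl; have /and3P[py2 ra2 rb2] := Igo.
have r12 : refines (g lam) (g om) by rewrite -gref.
have n12 : g lam != g om.
  apply/negP => /eqP /ginj E; have := E Il Io => e; rewrite e in clo.
  by move: clo; rewrite -[X in X = _]addn0 -addn1 => /eqP; rewrite eqn_add2l.
have [A [B [C [HA HB nAB HC /andP[sA sB]]]]] := exists_merge py1 py2 r12 n12.
set z := (g lam :\ A :\ B) :|: [set A :|: B].
have M : merges (g lam) z A B by [].
have [pz r1z c1z _ memz] := merge_props py1 M.
have rz2 : refines z (g om).
  apply: ref_intro => D; rewrite memz => /orP[/andP[/andP[HD _] _]|/eqP ->].
    exact: ref_get r12 HD.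
  by exists C => //; rewrite subUset sA sB.
have Iz : in_interval a2 b2 z.
  by rewrite /in_interval pz (ref_trans ra1 r1z) (ref_trans rz2 rb2).
have [w Iw gw] := gsurj _ Iz.
have /and3P[pw _ _] := Iw.
have rlw : refines lam w by rewrite gref // gw.
have rwo : refines w om by rewrite gref // gw.
have c1 := ref_card pl pw rlw; have c2 := ref_card pw po rwo.
have : (#|w| == #|lam|) || (#|w| == #|om|).
  rewrite clo in c1 *; rewrite !eqn_leq c1 c2 /= andbT; case: leqP => // h; rewrite -ltnS; exact: leq_trans h _. 
case/orP => /eqP e.
  have E := ref_antisym pl pw rlw e; subst w.
  by move: c1z; rewrite gw -[X in X = _]addn0 -addn1 => /eqP; rewrite eqn_add2l.
have E := ref_antisym pw po rwo (esym e); subst w.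
by rewrite gw; exists A, B.
Qed.

Lemma path_ref n (x : part n) s : is_part x -> cover_path x s -> refines x (last x s).
Proof.
elim: s x => [|y s IH] x px /=; first by move=> _; exact: ref_refl.
case=> cv cp; have [py rxy _] := covers_props px cv.
exact: ref_trans rxy (IH y py cp).
Qed.

Lemma path_map (K : nat -> Prop) (phi : nat -> nat) (l : seq nat) a :
  (forall k1 k2, K k1 -> K k2 -> (phi k1 < phi k2) = (k1 < k2)) ->
  K a -> (forall k, k \in l -> K k) ->
  path ltn (phi a) (map phi l) = path ltn a l.
Proof.
move=> H; elim: l a => [|b l IH] a Ka Kl //=.
have Kb : K b by apply: Kl; rewrite inE eqxx.
by rewrite H // IH // => k kl; apply: Kl; rewrite inE kl orbT.
Qed.

Lemma sorted_map_mono (K : nat -> Prop) (phi : nat -> nat) (l : seq nat) :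
  (forall k1 k2, K k1 -> K k2 -> (phi k1 < phi k2) = (k1 < k2)) ->
  (forall k, k \in l -> K k) ->
  sorted ltn (map phi l) = sorted ltn l.
Proof.
case: l => [|a l] //= H Kl; apply: path_map H _ _; first by apply: Kl; rewrite inE eqxx.
by move=> k kl; apply: Kl; rewrite inE kl orbT.
Qed.

Lemma lex_map (K : nat -> Prop) (phi : nat -> nat) (s t : seq nat) :
  (forall k1 k2, K k1 -> K k2 -> (phi k1 < phi k2) = (k1 < k2)) ->
  (forall k, k \in s -> K k) -> (forall k, k \in t -> K k) ->
  lex_le (map phi s) (map phi t) = lex_le s t.
Proof.
move=> H; elim: s t => [|a s IH] [|b t] //= Ks Kt.
have Ka : K a by apply: Ks; rewrite inE eqxx.
have Kb : K b by apply: Kt; rewrite inE eqxx.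
have Eq : (phi a == phi b) = (a == b).
  by rewrite eqn_leq [phi a <= _]leqNgt [phi b <= _]leqNgt !H // eqn_leq [a <= b]leqNgt [b <= a]leqNgt andbC.
rewrite H // Eq IH //.
  by move=> k kl; apply: Ks; rewrite inE kl orbT.
by move=> k kl; apply: Kt; rewrite inE kl orbT.
Qed.

Theorem mainTheorem4 : compatible_with_isos com_label.
Proof.
move=> n1 n2 a1 b1 a2 b2 g f Hi1 Hi2 [[gI ginj gsurj gref] [[fE fmono fsurj] fdelta]].
set E1 := Eset a1 b1.
have fmono' : forall i j, i \in E1 -> j \in E1 -> (f i < f j) = (i < j).
  move=> i j iE jE; case: (ltngtP i j) => h.
  - by rewrite fmono.
  - by apply/negbTE; rewrite -leqNgt ltnW // fmono.
  - by rewrite (val_inj h) ltnn.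
have lab : forall lam om, in_interval a1 b1 lam -> in_interval a1 b1 om -> covers lam om ->
  exists2 m, m \in E1 & (com_label lam om = (val m).+1 /\ com_label (g lam) (g om) = (f m).+1).
  move=> lam om Il Io cv.
  have /and3P[pl _ _] := Il.
  have cvg := covers_g gI ginj gsurj gref Il Io cv.
  have /and3P[pgl _ _] := gI _ Il.
  have [_ rlo _] := covers_props pl cv.
  have cv0 := cv.
  case: cv => A [B M]; have [HA HB _ _] := M.
  case: (min_ex (part_ne pl HA)) => mA hA; case: (min_ex (part_ne pl HB)) => mB hB.
  have [DE deltaE labE] := merge_D pl M hA hB.
  case: cvg => A' [B' M']; have [HA' HB' _ _] := M'.
  case: (min_ex (part_ne pgl HA')) => mA' hA'; case: (min_ex (part_ne pgl HB')) => mB' hB'.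
  have [_ deltaE' labE'] := merge_D pgl M' hA' hB'.
  have inE1 : forall i, i \in Dset lam om -> i \in E1.
    move=> i iD; rewrite /E1 /Eset inE; apply/existsP; exists lam; apply/existsP; exists om.
    by rewrite Il Io rlo iD.
  have mAE : mA \in E1 by apply: inE1; rewrite DE !inE eqxx.
  have mBE : mB \in E1 by apply: inE1; rewrite DE !inE eqxx orbT.
  have SE : [set mA'; mB'] = [set f mA; f mB].
    have := fdelta _ _ Il Io cv0.
    rewrite deltaE' deltaE imset_set1 => /set1_inj ->.
    by rewrite imsetU1 imset_set1.
  exists (if mA < mB then mB else mA); first by case: ifP.
  rewrite labE labE' (max2_eq SE); split.
    by case: ifP => h; [rewrite (maxn_idPr (ltnW h)) | rewrite (maxn_idPl _) // leqNgt h].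
  case: ifP => h.
    by rewrite (maxn_idPr _) // ltnW // fmono.
  by rewrite (maxn_idPl _) // leqNgt fmono' // h.
pose phi k := if (insub k.-1 : option 'I_n1) is Some i then (f i).+1 else 0.
pose K k := exists2 m, m \in E1 & k = (val m).+1.
have phiE : forall m : 'I_n1, phi (val m).+1 = (f m).+1 by move=> m; rewrite /phi /= valK.
have Kmono : forall k1 k2, K k1 -> K k2 -> (phi k1 < phi k2) = (k1 < k2).
  move=> _ _ [m1 E1m ->] [m2 E2m ->]; rewrite !phiE !ltnS; exact: fmono'.
have labphi : forall lam om, in_interval a1 b1 lam -> in_interval a1 b1 om -> covers lam om ->
    com_label (g lam) (g om) = phi (com_label lam om) /\ K (com_label lam om).
  move=> lam om Il Io cv; case: (lab _ _ Il Io cv) => m mE [-> ->]; split; first by rewrite phiE.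
  by exists m.
have chainP : forall x s, in_interval a1 b1 x -> cover_path x s -> last x s = b1 ->
   chain_labels com_label (g x) (map g s) = map phi (chain_labels com_label x s) /\
   (forall k, k \in chain_labels com_label x s -> K k).
  move=> x s; elim: s x => [|y s IH] x Ix //= [cv cp] ls.
  have /and3P[px rax rxb] := Ix.
  have [py rxy _] := covers_props px cv.
  have Iy : in_interval a1 b1 y.
    by rewrite /in_interval py (ref_trans rax rxy) -ls path_ref.
  have [e1 e2] := labphi _ _ Ix Iy cv.
  have [IH1 IH2] := IH y Iy cp ls.
  rewrite /chain_labels /= in IH1 IH2 *.
  rewrite e1 IH1; split => // k; rewrite inE => /orP[/eqP ->|]; [exact: e2 | exact: IH2].
exists phi; split.
  by move=> lam om Il Io cv; case: (labphi _ _ Il Io cv).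
have Ia1 : in_interval a1 b1 a1.
  by case/and3P: Hi1 => pa pb r; rewrite /in_interval pa ref_refl r.
split.
  move=> s [cp ls]; have [e1 e2] := chainP _ _ Ia1 cp ls.
  by rewrite /increasing e1 (sorted_map_mono Kmono e2); split.
move=> s t [cps lss] [cpt lst].
have [e1 e2] := chainP _ _ Ia1 cps lss; have [e3 e4] := chainP _ _ Ia1 cpt lst.
by rewrite e1 e3 (lex_map Kmono e2 e4).
Qed.
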